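(* Let $K,L$ be (not necessarily associative) rings with identity, let $q\colon K\to L$ be a multiplicative quadratic map with $f(a,b)=q(a+b)-q(a)-q(b)$, and let $a\in K$ satisfy $f(a,b)=0$ for all $b\in K$. Then: (1) $q(a)f(b,c)=f(b,c)q(a)=0$ for all $b,c\in K$; (2) if $q(a)$ is not a zero-divisor (in particular $q(a)\neq 0$), then $\operatorname{char}L=2$ and $q$ is a ring homomorphism.
   Context: A map $q\colon K\to L$ between rings with identity is called a multiplicative quadratic map if (i) $q(ab)=q(a)q(b)$ for all $a,b\in K$; (ii) $q(n\cdot 1_K)=n^2\cdot 1_L$ for all $n\in\mathbb{Z}$; (iii) the map $f\colon K\times K\to L$, $f(a,b)=q(a+b)-q(a)-q(b)$, is biadditive. *)

(* Defs.v *)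
From HB Require Import structures.
From mathcomp Require Import all_boot all_order all_algebra.
Set Implicit Arguments. Unset Strict Implicit. Unset Printing Implicit Defensive.
Import GRing.Theory.
Local Open Scope ring_scope.

Record naRing := NaRing {
  nar_car :> zmodType;
  nar_mul : nar_car -> nar_car -> nar_car;
  nar_one : nar_car;
  nar_mulDl : forall x y z, nar_mul (x + y) z = nar_mul x z + nar_mul y z;
  nar_mulDr : forall x y z, nar_mul x (y + z) = nar_mul x y + nar_mul x z;
  nar_mul1r : forall x, nar_mul nar_one x = x;
  nar_mulr1 : forall x, nar_mul x nar_one = x
}.

Definition polar (K L : naRing) (q : K -> L) (a b : K) : L :=
  q (a + b) - q a - q b.

Definition mult_quadratic (K L : naRing) (q : K -> L) : Prop :=
  [/\ (forall a b : K, q (nar_mul a b) = nar_mul (q a) (q b)),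
      (forall n : int, q ((nar_one K) *~ n) = (nar_one L) *~ (n * n)),
      (forall a b c : K, polar q (a + b) c = polar q a c + polar q b c) &
      (forall a b c : K, polar q a (b + c) = polar q a b + polar q a c)].

(* x is not a zero-divisor: x <> 0 and x is left and right cancellable
   against 0 (so 0 counts as a zero-divisor, as in the paper's
   "in particular q(a) <> 0"). *)
Definition non_zero_divisor (L : naRing) (x : L) : Prop :=
  [/\ x <> 0,
      (forall y : L, nar_mul x y = 0 -> y = 0) &
      (forall y : L, nar_mul y x = 0 -> y = 0)].

(* char L = 2 : 2 is the least positive n with n * 1_L = 0. *)
Definition char_two (L : naRing) : Prop :=
  nar_one L <> 0 /\ nar_one L + nar_one L = 0.

Definition ring_hom (K L : naRing) (q : K -> L) : Prop :=
  [/\ (forall a b : K, q (a + b) = q a + q b),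
      (forall a b : K, q (nar_mul a b) = nar_mul (q a) (q b)) &
      q (nar_one K) = nar_one L].

(* Main.v *)
Require Import Defs.
From HB Require Import structures.
From mathcomp Require Import all_boot all_order all_algebra.
Import GRing.Theory.
Local Open Scope ring_scope.

Lemma nmul0r (L : naRing) (x : L) : nar_mul 0 x = 0.
Proof.
have h := nar_mulDl 0 0 x; rewrite addr0 in h.
by apply: (@addrI _ (nar_mul 0 x)); rewrite -h addr0.
Qed.

Lemma nmulr0 (L : naRing) (x : L) : nar_mul x 0 = 0.
Proof.
have h := nar_mulDr x 0 0; rewrite addr0 in h.
by apply: (@addrI _ (nar_mul x 0)); rewrite -h addr0.
Qed.

Lemma polarC (K L : naRing) (q : K -> L) x y : polar q x y = polar q y x.
Proof. by rewrite /polar (addrC x y) -!addrA (addrC (- q x)). Qed.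

Lemma polar_eq (K L : naRing) (q : K -> L) x y :
  q (x + y) = q x + q y + polar q x y.
Proof. rewrite /polar. by rewrite -(addrA (q (x + y))) -opprD [RHS]addrC subrK. Qed.

Theorem lemma2p2 (K L : naRing) (q : K -> L) (a : K)
  (hq : mult_quadratic q)
  (ha : forall b : K, polar q a b = 0) :
  (forall b c : K,
     nar_mul (q a) (polar q b c) = 0 /\ nar_mul (polar q b c) (q a) = 0) /\
  (non_zero_divisor (q a) -> char_two L /\ ring_hom q).
Proof.
case: hq => qM qn fDl fDr.
have fDr' : forall x y z, polar q x (y + z) = polar q x y + polar q x z by [].
have LF : forall x b c, nar_mul (q x) (polar q b c) = polar q (nar_mul x b) (nar_mul x c).
  move=> x b c.
  have := qM x (b + c); rewrite nar_mulDr polar_eq polar_eq !nar_mulDr -!qM.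
  by move/addrI.
have RF : forall x b c, nar_mul (polar q b c) (q x) = polar q (nar_mul b x) (nar_mul c x).
  move=> x b c.
  have := qM (b + c) x; rewrite nar_mulDl polar_eq polar_eq !nar_mulDl -!qM.
  by move/addrI.
have qaD : forall y, q (a + y) = q a + q y by move=> y; rewrite polar_eq ha addr0.
have Lab : forall b y, polar q (nar_mul a b) y = 0.
  move=> b y.
  have := LF (a + y) b (nar_one K).
  rewrite qaD nar_mulDl !nar_mulDl !nar_mulr1 !fDl !fDr LF LF.
  rewrite !nar_mulr1 (@polarC _ _ q (nar_mul y b) a) ha add0r => /addIr h.
  by apply: (@addrI _ (polar q (nar_mul a b) a)); rewrite addr0 -h.
have Rba : forall b y, polar q (nar_mul b a) y = 0.
  move=> b y.
  have := RF (a + y) b (nar_one K).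
  rewrite qaD nar_mulDr !nar_mulDr !nar_mul1r !fDl !fDr RF RF.
  rewrite !nar_mul1r (@polarC _ _ q (nar_mul b y) a) ha add0r => /addIr h.
  by apply: (@addrI _ (polar q (nar_mul b a) a)); rewrite addr0 -h.
have P1 : forall b c, nar_mul (q a) (polar q b c) = 0 /\ nar_mul (polar q b c) (q a) = 0.
  by move=> b c; rewrite LF RF Lab Rba.
split=> // -[nz hl hr].
have f0 : forall b c, polar q b c = 0 by move=> b c; apply: hl; case: (P1 b c).
have qadd : forall b c, q (b + c) = q b + q c by move=> b c; rewrite polar_eq f0 addr0.
have q1 : q (nar_one K) = nar_one L by have := qn 1; rewrite !mulr1z.
split; last by split.
split.
  move=> h1; apply: nz; by rewrite -(nar_mulr1 (q a)) h1 nmulr0.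
have := qn 2.
have -> : (nar_one K) *~ 2 = nar_one K + nar_one K by rewrite -mulrz_nat mulr2n.
rewrite qadd q1.
have -> : (2 * 2 = 2%:Z + 2%:Z)%R by [].
rewrite mulrzDr => h.
have e : nar_one L *~ 2%Z = nar_one L + nar_one L by rewrite -mulr2n.
rewrite e in h.
have h2 : nar_one L + nar_one L + 0 = nar_one L + nar_one L + (nar_one L + nar_one L).
  by rewrite addr0.
exact: esym (addrI _ h2).
Qed.
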